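(* For a Tychonoff space $X$, the following conditions are equivalent: (1) $C_p(X)$ is distinguished. (2) Every countable partition of $X$ admits a point-finite open expansion in $X$. (3) Every countable collection of pairwise disjoint subsets of $X$ admits a point-finite open expansion in $X$. (4) $X$ is a $\Delta$-space.
   Context: $C_p(X)$ denotes the vector space of all continuous real-valued functions on $X$ with the topology of pointwise convergence. A locally convex space $E$ is distinguished if its strong dual (the topological dual of $E$ with the topology of uniform convergence on bounded subsets of $E$) is barrelled. A partition of $X$ is a cover of $X$ by pairwise disjoint sets. A collection $\{U_\gamma:\gamma\in\Gamma\}$ is an expansion of a collection $\{X_\gamma:\gamma\in\Gamma\}$ in $X$ if $X_\gamma\subseteq U_\gamma\subseteq X$ for every $\gamma$; it is an open expansion if all $U_\gamma$ are open in $X$; it is point-finite if no point of $X$ belongs to infinitely many $U_\gamma$. A topological space $X$ is a $\Delta$-space if for every decreasing sequence $\{D_n:n\in\omega\}$ of subsets of $X$ with $\bigcap_n D_n=\emptyset$ there is a decreasing sequence $\{V_n:n\in\omega\}$ of open subsets of $X$ with $D_n\subseteq V_n$ for all $n$ and $\bigcap_n V_n=\emptyset$. All spaces are Tychonoff and infinite. *)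

(* Defs.v *)
From HB Require Import structures.
From mathcomp Require Import all_boot all_order all_algebra.
From mathcomp Require Import all_classical all_reals all_analysis.
Unset Printing Implicit Defensive.
Import Order.TTheory GRing.Theory Num.Theory numFieldNormedType.Exports.
Local Open Scope classical_set_scope.
Local Open Scope ring_scope.

(* Real-valued scalars: any realType R (all realTypes are isomorphic to the reals). *)

Definition tychonoff_space (R : realType) (X : topologicalType) : Prop :=
  accessible_space X /\
  forall (F : set X) (x : X), closed F -> ~ F x ->
    exists f : X -> R, continuous f /\ f x = 0 /\
      (forall y, 0 <= f y <= 1) /\ (forall y, F y -> f y = 1).

(* The underlying set of C_p(X): continuous real-valued functions on X,
   viewed inside the space {ptws X -> R} (product = pointwise topology);
   C_p(X) carries the subspace topology. *)
Definition Cp (R : realType) (X : topologicalType) : set (X -> R) :=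
  [set f | continuous f].

(* B ⊆ C_p(X) is bounded: absorbed by every neighbourhood of 0 in C_p(X)
   (a neighbourhood of 0 in the subspace is of the form V ∩ C_p(X) with V a
   neighbourhood of 0 in {ptws X -> R}). *)
Definition Cp_bounded (R : realType) (X : topologicalType) (B : set (X -> R)) : Prop :=
  B `<=` Cp R X /\
  forall V : set {ptws X -> R}, nbhs (0 : {ptws X -> R}) V ->
    exists r : R, 0 < r /\ forall s : R, r < `|s| ->
      forall f, B f -> exists g : X -> R, V g /\ Cp R X g /\ f = s *: g.

(* The topological dual of C_p(X): continuous linear functionals on C_p(X).
   A functional is represented by a map (X -> R) -> R; only its values on
   C_p(X) are relevant. *)
Definition Cp_dual (R : realType) (X : topologicalType) : set ((X -> R) -> R) :=
  [set phi | (forall (a b : R) (f g : X -> R), Cp R X f -> Cp R X g ->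
                phi (a *: f + b *: g) = a * phi f + b * phi g) /\
             {within (Cp R X : set {ptws X -> R}), continuous (phi : {ptws X -> R} -> R)}].

(* Strong topology beta(E', E) on E' = Cp_dual: uniform convergence on bounded
   subsets of E.  A basic neighbourhood of psi is
   { phi in E' | forall f in B, |phi f - psi f| < eps } with B bounded, eps > 0
   (finite unions of bounded sets are bounded, so these form a base). *)
Definition strong_nbhs (R : realType) (X : topologicalType)
    (psi : (X -> R) -> R) (U : set ((X -> R) -> R)) : Prop :=
  exists (B : set (X -> R)) (eps : R), Cp_bounded R X B /\ 0 < eps /\
    [set phi | Cp_dual R X phi /\ forall f, B f -> `|phi f - psi f| < eps] `<=` U.

Definition strong_closed (R : realType) (X : topologicalType)
    (A : set ((X -> R) -> R)) : Prop :=
  forall psi, Cp_dual R X psi -> ~ A psi ->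
    strong_nbhs R X psi (~` A).

Definition strong_barrel (R : realType) (X : topologicalType)
    (A : set ((X -> R) -> R)) : Prop :=
  A `<=` Cp_dual R X /\
  strong_closed R X A /\
  (forall (phi psi : (X -> R) -> R) (a b : R), A phi -> A psi ->
     `|a| + `|b| <= 1 -> A (a *: phi + b *: psi)) /\
  (forall phi, Cp_dual R X phi ->
     exists r : R, 0 < r /\ forall s : R, r <= `|s| ->
       exists chi, A chi /\ phi = s *: chi).

(* C_p(X) is distinguished: its strong dual is barrelled, i.e. every barrel of
   the strong dual is a neighbourhood of 0 in the strong topology. *)
Definition Cp_distinguished (R : realType) (X : topologicalType) : Prop :=
  forall A : set ((X -> R) -> R), strong_barrel R X A -> strong_nbhs R X (fun _ => 0) A.

(* Countable collections are indexed by nat (finite ones padded with empty sets). *)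
Definition pairwise_disjoint_fam (X : Type) (D : nat -> set X) : Prop :=
  forall i j, i <> j -> D i `&` D j = set0.

Definition partition_fam (X : Type) (D : nat -> set X) : Prop :=
  pairwise_disjoint_fam X D /\ \bigcup_n D n = setT.

Definition point_finite_open_expansion (X : topologicalType)
    (D U : nat -> set X) : Prop :=
  (forall n, D n `<=` U n) /\ (forall n, open (U n)) /\
  (forall x, finite_set [set n | U n x]).

Definition delta_space (X : topologicalType) : Prop :=
  forall D : nat -> set X,
    (forall n, D n.+1 `<=` D n) -> \bigcap_n D n = set0 ->
    exists V : nat -> set X,
      (forall n, open (V n)) /\ (forall n, V n.+1 `<=` V n) /\
      (forall n, D n `<=` V n) /\ \bigcap_n V n = set0.

(* Main.v *)
Require Import Defs.
From HB Require Import structures.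
From mathcomp Require Import all_boot all_order all_algebra.
From mathcomp Require Import all_classical all_reals all_analysis.
From mathcomp Require Import ring lra.
Import Order.TTheory GRing.Theory Num.Theory numFieldNormedType.Exports.
Local Open Scope classical_set_scope.

Lemma nat_finite_bound {A : set nat} : finite_set A ->
  exists N, forall k, A k -> (k < N)%N.
Proof.
move=> fA; exists (\max_(k <- finmap.enum_fset (fset_set A)) k).+1 => k Ak.
rewrite ltnS; apply: (@leq_bigmax_seq _ _ xpredT (fun k => k)) => //.
by rewrite in_fset_set // inE.
Qed.

Lemma bound_finite (A : set nat) N : (forall k, A k -> (k < N)%N) -> finite_set A.
Proof.
move=> h; apply: (@sub_finite_set _ _ `I_N); last exact: finite_II.
by move=> k /h.
Qed.

Section topo.
Variable X : topologicalType.

Definition PART := forall D : nat -> set X, partition_fam X D ->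
          exists U, point_finite_open_expansion X D U.
Definition DISJ := forall D : nat -> set X, pairwise_disjoint_fam X D ->
          exists U, point_finite_open_expansion X D U.

Lemma disj_part : DISJ -> PART.
Proof. by move=> h D [hD _]; exact: h. Qed.

Lemma part_disj : PART -> DISJ.
Proof.
move=> h D hD.
pose D' n := if n is 0%N then D 0%N `|` ~` (\bigcup_n D n) else D n.
have [|U [sU [oU pU]]] := h D'.
  split.
    move=> [|i] [|j] //= ij; apply/seteqP; split => // x [].
    - case=> [D0 Dj|nD Dj]; last by apply: nD; exists j.+1.
      by have := hD 0%N j.+1 ij; move/seteqP => [+ _]; apply; split.
    - move=> Di [D0|nD]; last by apply: nD; exists i.+1.
      by have := hD i.+1 0%N ij; move/seteqP => [+ _]; apply; split.
    - move=> Di Dj; have := hD i.+1 j.+1 ij; move/seteqP => [+ _]; apply.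
      by split.
  apply/seteqP; split => // x _.
  have [[n _ Dn]|nD] := pselect ((\bigcup_n D n) x).
    by exists n => //; case: n Dn => //= Dn; left.
  by exists 0%N => //=; right.
exists U; split => //; case=> [|n] x Dx; apply: sU => //=; by left.
Qed.

Lemma dec_mono {D : nat -> set X} : (forall n, D n.+1 `<=` D n) ->
  forall m n, (m <= n)%N -> D n `<=` D m.
Proof.
move=> hD m n /subnK <-; elim: (n - m)%N => // d IH x.
by rewrite addSn => /hD /IH.
Qed.

Lemma disj_delta : DISJ -> delta_space X.
Proof.
move=> h D hD D0.
pose E n := D n `\` D n.+1.
have [|U [sU [oU pU]]] := h E.
  move=> i j ij; apply/seteqP; split => // x [[Di nDi] [Dj nDj]].
  have [ltij|ltij|eij] := ltngtP i j; last by [].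
    by apply: nDi; move: Dj; apply: dec_mono.
  by apply: nDj; move: Di; apply: dec_mono.
exists (fun n => \bigcup_(k in [set k | (n <= k)%N]) U k); split.
  by move=> n; apply: bigcup_open => k _; exact: oU.
split.
  by move=> n x [k /= nk Ukx]; exists k => //=; exact: ltnW.
split.
  move=> n x Dnx.
  have [[m nDm]|hx] := pselect (exists m, ~ D m x); last first.
    exfalso; suff : (\bigcap_n D n) x by rewrite D0.
    by move=> k _; have [//|nk] := pselect (D k x); exfalso; apply: hx; exists k.
  have : forall d, D n x -> ~ D (n + d)%N x ->
      exists k, (n <= k)%N /\ D k x /\ ~ D k.+1 x.
    elim=> [|d IH] Dn nDd; first by rewrite addn0 in nDd.
    have [Dd|nd] := pselect (D (n + d)%N x); last exact: IH.
    by exists (n + d)%N; split; [exact: leq_addr|split => //; rewrite -addnS].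
  move=> /(_ (m - n)%N Dnx) [|k [nk [Dk nDk]]].
    case: (leqP n m) => [nm|mn]; first by rewrite subnKC.
    by move=> _; apply: nDm; exact: (dec_mono hD _ _ (ltnW mn) _ Dnx).
  by exists k => //; apply: sU; split.
apply/seteqP; split => // x Vx.
have [N hN] := nat_finite_bound (pU x).
have [k /= Nk Ukx] := Vx N I.
by have := hN k Ukx; rewrite ltnNge Nk.
Qed.

Lemma delta_disj : delta_space X -> DISJ.
Proof.
move=> h D hD.
pose F n := \bigcup_(k in [set k | (n <= k)%N]) D k.
have [||V [oV [dV [sV V0]]]] := h F.
- by move=> n x [k /= nk Dk]; exists k => //=; exact: ltnW.
- apply/seteqP; split => // x Fx.
  have [k /= _ Dk] := Fx 0%N I.
  have [k' /= kk' Dk'] := Fx k.+1 I.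
  have kk : k <> k' by move=> e; rewrite e ltnn in kk'.
  by have /seteqP[H _] := hD k k' kk; exact: (H x (conj Dk Dk')).
exists V; split; first by move=> n x Dx; apply: sV; exists n => /=.
split => // x.
have [[m nVm]|hx] := pselect (exists m, ~ V m x); last first.
  exfalso; suff : (\bigcap_n V n) x by rewrite V0.
  by move=> k _; have [//|nk] := pselect (V k x); exfalso; apply: hx; exists k.
apply: (@bound_finite _ m) => n Vn; rewrite ltnNge; apply/negP => mn.
by apply: nVm; exact: (dec_mono dV _ _ mn _ Vn).
Qed.
End topo.
Local Open Scope ring_scope.

Section an.
Variables (R : realType) (X : topologicalType).

Definition box (s : seq X) (d : R) : set {ptws X -> R} :=
  [set h | forall x, x \in s -> `|h x| < d].

Lemma nbhs0_box (V : set {ptws X -> R}) : nbhs (0 : {ptws X -> R}) V ->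
  exists s d, 0 < d /\ box s d `<=` V.
Proof.
pose G := filter_from [set p : seq X * R | 0 < p.2] (fun p => box p.1 p.2).
have FG : Filter G.
  apply: filter_from_filter; first by exists ([::], 1) => /=.
  move=> [s1 d1] [s2 d2] /= d10 d20; exists (s1 ++ s2, Num.min d1 d2) => /=.
    by rewrite lt_min d10 d20.
  move=> h /= hb; split => x xs.
    by have := hb x; rewrite mem_cat xs lt_min => /(_ isT) /andP[].
  by have := hb x; rewrite mem_cat xs orbT lt_min => /(_ isT) /andP[].
have : {ptws, G --> (0 : X -> R)}.
  apply/pointwise_cvgP => t; apply/cvgrPdist_lt => e e0.
  exists ([:: t], e) => //= h /=; rewrite /box /= => /(_ t).
  by rewrite mem_seq1 eqxx sub0r normrN => /(_ isT).
move=> /(_ V) GV /GV [[s d] /= d0 sV].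
by exists s, d.
Qed.

Lemma ev_cont (t : X) : continuous (fun f : {ptws X -> R} => f t).
Proof.
move=> f; have : {ptws, nbhs f --> f} by [].
by move/pointwise_cvgP => /(_ t).
Qed.


Lemma cont_sum (T : topologicalType) (I : Type) (s : seq I) (F : I -> T -> R) :
  (forall i, continuous (F i)) -> continuous (fun y => \sum_(i <- s) F i y).
Proof.
move=> hF; elim: s => [|i s IH].
  by under eq_fun do rewrite big_nil; exact: cst_continuous.
under eq_fun do rewrite big_cons.
by move=> y; apply: continuousD; [exact: hF|exact: IH].
Qed.

Lemma cont_max (T : topologicalType) (I : Type) (s : seq I) (F : I -> T -> R) :
  (forall i, continuous (F i)) ->
  continuous (fun y => \big[Num.max/0]_(i <- s) F i y).
Proof.
move=> hF; elim: s => [|i s IH].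
  by under eq_fun do rewrite big_nil; exact: cst_continuous.
under eq_fun do rewrite big_cons.
move=> y; apply: (@continuous_max R T (F i) (fun y => \big[Num.max/0]_(i <- s) F i y)).
  exact: hF.
exact: IH.
Qed.

Lemma sumev_cont (ps : seq (X * R)) :
  continuous (fun f : {ptws X -> R} => \sum_(p <- ps) p.2 * f p.1).
Proof.
apply: cont_sum => p f.
apply: (continuousM (s:=fun=> p.2) (t:=fun f : {ptws X -> R} => f p.1)).
  exact: cst_continuous.
exact: ev_cont.
Qed.

Lemma CpD f g : Cp R X f -> Cp R X g -> Cp R X (f + g).
Proof. by move=> hf hg x; apply: continuousD; [exact: hf|exact: hg]. Qed.

Lemma CpZ a f : Cp R X f -> Cp R X (a *: f).
Proof.
move=> hf x; apply: (continuousM (s:=fun=> a) (t:=f)).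
  exact: cst_continuous.
exact: hf.
Qed.

Lemma CpB f g : Cp R X f -> Cp R X g -> Cp R X (f - g).
Proof. by move=> hf hg x; apply: continuousB; [exact: hf|exact: hg]. Qed.

Lemma Cp0 : Cp R X 0.
Proof. exact: cst_continuous. Qed.

Hypothesis HT : tychonoff_space R X.

Lemma bump (z : X) (C : set X) : closed C -> ~ C z ->
  exists phi : X -> R, continuous phi /\ phi z = 1 /\
    (forall y, 0 <= phi y <= 1) /\ (forall y, C y -> phi y = 0).
Proof.
move=> cC nCz; have [f [cf [fz [f01 fC]]]] := HT.2 C z cC nCz.
exists (fun y => 1 - f y); split.
  by move=> x; apply: continuousB; [exact: cst_continuous|exact: cf].
split; first by rewrite fz subr0.
split; last by move=> y /fC ->; rewrite subrr.
move=> y; have /andP[f0 f1] := f01 y.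
by rewrite subr_ge0 f1 /= lerBlDr lerDl.
Qed.

Lemma interp (zs : seq X) (v : X -> R) (O : X -> set X) : uniq zs ->
  (forall z, z \in zs -> open (O z) /\ O z z) ->
  exists g : X -> R, continuous g /\ (forall z, z \in zs -> g z = v z) /\
    (forall y c, 0 <= c -> (forall z, z \in zs -> O z y -> `|v z| <= c) ->
       `|g y| <= c).
Proof.
move=> uzs hO.
have hb : forall z, exists phi : X -> R, continuous phi /\ (z \in zs -> phi z = 1 /\
    (forall y, 0 <= phi y <= 1) /\
    (forall y, (~` O z `|` [set y | y \in zs /\ y != z]) y -> phi y = 0)).
  move=> z; have [zsz|] := boolP (z \in zs); last first.
    by exists (fun _ => 0); split => //; exact: cst_continuous.
  have [oO Ozz] := hO z zsz.
  have cC : closed (~` O z `|` [set y | y \in zs /\ y != z]).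
    apply: closedU; first by rewrite closedC.
    have -> : [set y | y \in zs /\ y != z] = [set` seq.filter (predC1 z) zs].
      by apply/seteqP; split => y /=; rewrite mem_filter /=; [move=> [-> ->]|move=> /andP[-> ->]].
    by apply: (accessible_finite_set_closed.1 HT.1); exact: finite_seq.
  have nCz : ~ (~` O z `|` [set y | y \in zs /\ y != z]) z.
    by move=> [/(_ Ozz)//|[_]]; rewrite eqxx.
  have [phi [cphi hphi]] := @bump z _ cC nCz.
  by exists phi.
have [phi hphi] := choice hb.
pose g0 y := \sum_(z <- zs) v z * phi z y.
pose M y := \big[Num.max/0]_(z <- zs) (`|v z| * phi z y).
have cphi z : continuous (phi z) by have [] := hphi z.
have phiv z0 z : z0 \in zs -> z \in zs -> phi z z0 = if z == z0 then 1 else 0.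
  move=> h0 h; have [_ /(_ h) [hzz [_ hC]]] := hphi z.
  case: eqP => [<-//|/eqP nz]; apply: hC; right; split => //.
  by rewrite eq_sym.
have g0z z0 : z0 \in zs -> g0 z0 = v z0.
  move=> h0; rewrite /g0 (bigD1_seq z0) //= phiv // eqxx mulr1 big1_seq ?addr0 //.
  by move=> z /andP[nz zz]; rewrite phiv // (negbTE nz) mulr0.
have M0 y : 0 <= M y.
  by rewrite /M; elim/big_rec: _ => // i x _ hx; rewrite le_max hx orbT.
have Mz z0 : z0 \in zs -> M z0 = `|v z0|.
  move=> h0; apply/eqP; rewrite eq_le; apply/andP; split.
    rewrite /M big_seq; apply: bigmax_le => // z /= zz.
    rewrite phiv //; case: eqP => [->|_]; first by rewrite mulr1.
    by rewrite mulr0.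
  have := le_bigmax_seq 0 z0 xpredT (fun z => `|v z| * phi z z0) h0 isT.
  by rewrite phiv // eqxx mulr1.
pose g y := Num.max (- M y) (Num.min (M y) (g0 y)).
have cM : continuous M.
  apply: cont_max => z y.
  apply: (continuousM (s:=fun=> `|v z|) (t:=phi z)); first exact: cst_continuous.
  exact: cphi.
have cg0 : continuous g0.
  apply: cont_sum => z y.
  apply: (continuousM (s:=fun=> v z) (t:=phi z)); first exact: cst_continuous.
  exact: cphi.
exists g; split.
  move=> y; apply: (continuous_max (f := fun y => - M y) (g := fun y => Num.min (M y) (g0 y))).
    by apply: (continuousN (f := M)); exact: cM.
  by apply: (continuous_min (f := M) (g := g0)); [exact: cM|exact: cg0].
split.
  move=> z0 h0; rewrite /g Mz // g0z //.
  have := lexx `|v z0|; rewrite ler_norml => /andP[h1 h2].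
  by rewrite min_r // max_r.
move=> y c c0 hc; apply: (@le_trans _ _ (M y)).
  rewrite ler_norml; apply/andP; split; first by rewrite le_max lexx.
  by rewrite ge_max ge_min lexx /= andbT lerNl (le_trans _ (M0 y)) // oppr_le0.
rewrite /M big_seq; apply: bigmax_le => // z /= zz.
have [_ /(_ zz) [_ [h01 hC]]] := hphi z.
have [Oy|nOy] := pselect (O z y).
  apply: le_trans (hc z zz Oy); apply: ler_piMr => //.
  by have /andP[] := h01 y.
by rewrite hC ?mulr0 //; left.
Qed.

Definition sumfun (ps : seq (X * R)) : (X -> R) -> R :=
  fun f => \sum_(p <- ps) p.2 * f p.1.

Lemma sumfun_dual ps : Cp_dual R X (sumfun ps).
Proof.
split.
  move=> a b f g _ _; rewrite /sumfun !mulr_sumr -big_split /=.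
  by apply: eq_bigr => p _; rewrite !fctE mulrDr !mulrA ![_ * a]mulrC ![_ * b]mulrC.
exact/continuous_subspaceT/sumev_cont.
Qed.

Section lin.
Variable phi : (X -> R) -> R.
Hypothesis hphi : Cp_dual R X phi.

Lemma lin_scale a f : Cp R X f -> phi (a *: f) = a * phi f.
Proof.
move=> hf; have := hphi.1 a 0 f f hf hf.
by rewrite scale0r addr0 mul0r addr0.
Qed.

Lemma lin_add f g : Cp R X f -> Cp R X g -> phi (f + g) = phi f + phi g.
Proof.
by move=> hf hg; have := hphi.1 1 1 f g hf hg; rewrite !scale1r !mul1r.
Qed.

Lemma lin0 : phi 0 = 0.
Proof. by have := @lin_scale 0 0 Cp0; rewrite scale0r mul0r. Qed.

Lemma lin_sum (I : Type) (l : seq I) (a : I -> R) (e : I -> X -> R) :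
  (forall i, Cp R X (e i)) ->
  phi (fun y => \sum_(i <- l) a i * e i y) = \sum_(i <- l) a i * phi (e i).
Proof.
move=> he; elim: l => [|i l IH].
  rewrite big_nil; have -> : (fun y => \sum_(i <- [::]) a i * e i y) = 0.
    by apply: funext => y; rewrite big_nil.
  exact: lin0.
have -> : (fun y => \sum_(j <- i :: l) a j * e j y) =
    a i *: e i + (fun y => \sum_(j <- l) a j * e j y).
  by apply/funext => y; rewrite big_cons !fctE.
have hs : Cp R X (fun y => \sum_(j <- l) a j * e j y).
  apply: cont_sum => j x.
  apply: (continuousM (s:=fun=> a j) (t:=e j)); first exact: cst_continuous.
  exact: he.
by rewrite lin_add ?lin_scale ?IH ?big_cons //; exact: CpZ.
Qed.
End lin.

Lemma rep phi : Cp_dual R X phi -> exists zs : seq X, exists c : X -> R,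
  uniq zs /\ forall g, Cp R X g -> phi g = \sum_(z <- zs) c z * g z.
Proof.
move=> hphi; have [hlin hcont] := hphi.
have : phi @ nbhs_subspace (A:=(Cp R X : set {ptws X -> R})) (0 : {ptws X -> R}) --> phi 0.
  exact: hcont 0.
rewrite -nbhs_subspace_in; last exact: Cp0.
move/cvgrPdist_lt => /(_ 1 ltr01).
rewrite lin0 // /prop_near1 /within /= => /nbhs0_box [s [d [d0 sV]]].
have van g : Cp R X g -> (forall x, x \in s -> g x = 0) -> phi g = 0.
  move=> hg g0; apply/eqP; apply: contraT => ng.
  pose t := 2 / `|phi g|.
  have : box s d (t *: g).
    by move=> x xs; rewrite fctE g0 // scaler0 normr0.
  move/sV => /(_ (@CpZ t g hg)); rewrite sub0r normrN lin_scale //.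
  rewrite normrM /t normrM ger0_norm // normrV ?unitfE ?normr_eq0 //.
  by rewrite normr_id divfK ?normr_eq0 // ltNge ler1n.
pose zs := undup s.
have he : forall z, exists e : X -> R, continuous e /\
    forall y, y \in zs -> e y = if y == z then 1 else 0.
  move=> z; have [e [ce [he _]]] :=
    @interp zs (fun y => if y == z then 1 else 0) (fun=> setT) (undup_uniq s)
      (fun _ _ => conj openT I).
  by exists e.
have [e hee] := choice he.
exists zs, (fun z => phi (e z)); split; first exact: undup_uniq.
move=> g hg.
pose F := fun y => \sum_(z <- zs) g z * e z y.
have cF : Cp R X F.
  apply: cont_sum => j x.
  apply: (continuousM (s:=fun=> g j) (t:=e j)); first exact: cst_continuous.
  exact: (hee j).1.
have eg : g = (g - F) + F by rewrite subrK.
rewrite {1}eg lin_add //; last exact: CpB.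
rewrite van; last 2 first.
- exact: CpB.
- move=> x xs; rewrite !fctE /F.
  have xz : x \in zs by rewrite mem_undup.
  rewrite (bigD1_seq x) //=; last exact: undup_uniq.
  rewrite (hee x).2 // eqxx mulr1 big1_seq ?addr0 ?subrr //.
  by move=> z /andP[nz zz]; rewrite (hee z).2 // eq_sym (negbTE nz) mulr0.
rewrite add0r /F lin_sum //; last by move=> z; exact: (hee z).1.
by apply: eq_bigr => z _; rewrite mulrC.
Qed.

Lemma ptws_bounded (B : set (X -> R)) (M : X -> R) : B `<=` Cp R X ->
  (forall f x, B f -> `|f x| <= M x) -> Cp_bounded R X B.
Proof.
move=> BCp hM; split => // V /nbhs0_box [s [d [d0 sV]]].
pose K := \big[Num.max/0]_(x <- s) `|M x|.
have K0 : 0 <= K by rewrite /K; elim/big_rec: _ => // i x _ hx; rewrite le_max hx orbT.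
exists ((K + 1) / d); split; first by rewrite divr_gt0 // ltr_wpDl.
move=> sc hsc f Bf.
have sc0 : sc != 0.
  by rewrite -normr_gt0; apply: lt_trans hsc; rewrite divr_gt0 // ltr_wpDl.
exists (sc^-1 *: f); split.
  apply: sV => x xs; rewrite fctE normrM normrV ?unitfE //.
  rewrite ltr_pdivrMl ?normr_gt0 //.
  have hx : `|f x| <= K.
    apply: le_trans (hM f x Bf) _; apply: le_trans (ler_norm _) _.
    exact: (le_bigmax_seq 0 x xpredT (fun x => `|M x|) xs isT).
  apply: le_lt_trans hx _; rewrite -ltr_pdivrMr // mulrC.
  by apply: lt_trans hsc; rewrite mulrC ltr_pM2r ?invr_gt0 // ltrDl.
split; first exact: CpZ (BCp _ Bf).
by rewrite scalerA divff // scale1r.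
Qed.

Lemma bounded_ptws B : Cp_bounded R X B ->
  forall x, exists K, forall f, B f -> `|f x| < K.
Proof.
move=> [BCp hB] x.
have := ev_cont x (0 : {ptws X -> R}); move/cvgrPdist_lt => /(_ 1 ltr01) hV.
have [r [r0 hr]] := hB _ hV.
exists (r + 1) => f Bf.
have [|g [Vg [_ ->]]] := hr (r + 1) _ f Bf.
  by rewrite ger0_norm ?ltrDl // addr_ge0 // ltW.
move: Vg; rewrite /= fctE sub0r normrN normrM => g1.
by rewrite ger0_norm ?addr_ge0 ?ltW // gtr_pMr // ltr_wpDl // ltW.
Qed.

Lemma sat (A : set ((X -> R) -> R)) phi psi : strong_closed R X A -> A psi ->
  Cp_dual R X phi -> Cp_dual R X psi -> (forall g, Cp R X g -> phi g = psi g) ->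
  A phi.
Proof.
move=> hcl Apsi hphi hpsi he; have [//|nA] := pselect (A phi).
have [B [eps [[BCp _] [e0 sub]]]] := hcl phi hphi nA.
exfalso; apply: (sub psi) => //; split => // f Bf.
by rewrite he ?subrr ?normr0 //; exact: BCp.
Qed.

Section barrel.
Variable A : set ((X -> R) -> R).
Hypothesis hA : strong_barrel R X A.

Lemma barrel_comb {phi psi} a b : A phi -> A psi -> `|a| + `|b| <= 1 ->
  A (fun f => a * phi f + b * psi f).
Proof. by move=> h1 h2 h3; exact: hA.2.2.1 _ _ _ _ h1 h2 h3. Qed.

Lemma barrel0 : A (fun _ => 0).
Proof.
have [r [r0 hr]] := hA.2.2.2 _ (sumfun_dual [::]).
have [chi [Achi _]] : exists chi, A chi /\ sumfun [::] = r *: chi.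
  by apply: hr; rewrite ger0_norm // ltW.
have := barrel_comb 0 0 Achi Achi; rewrite normr0 addr0 ler01 => /(_ isT).
by congr A; apply: funext => f; rewrite !mul0r addr0.
Qed.

Lemma barrel_sum (I : eqType) (l : seq I) (lam : I -> R) (e : I -> (X -> R) -> R) :
  (forall i, A (e i)) -> \sum_(i <- l) `|lam i| <= 1 ->
  A (fun f => \sum_(i <- l) lam i * e i f).
Proof.
move=> he; elim: l lam => [|i l IH] lam hl.
  by have := barrel0; congr A; apply: funext => f; rewrite big_nil.
rewrite big_cons in hl.
have [S0|Sp] := eqVneq (\sum_(j <- l) `|lam j|) 0.
  have z j : j \in l -> lam j = 0.
    move=> jl; apply/normr0_eq0; move/eqP: S0; rewrite psumr_eq0 // => /allP/(_ _ jl).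
    by move/eqP.
  have := barrel_comb (lam i) 0 (he i) (he i); rewrite normr0 addr0.
  move: hl; rewrite S0 addr0 => hl /(_ hl).
  congr A; apply: funext => f; rewrite big_cons mul0r addr0 big_seq big1 ?addr0 //.
  by move=> j jl; rewrite z // mul0r.
set S := \sum_(j <- l) `|lam j| in hl Sp.
have S0 : 0 < S by rewrite lt_neqAle eq_sym Sp sumr_ge0.
have := IH (fun j => lam j / S).
have -> : \sum_(j <- l) `|lam j / S| = 1.
  rewrite -(divff Sp) mulr_suml; apply: eq_bigr => j _.
  by rewrite normrM normfV (gtr0_norm S0).
move=> /(_ (lexx _)) hIH.
have := barrel_comb (lam i) S (he i) hIH; rewrite (gtr0_norm S0) => /(_ hl).
congr A; apply: funext => f; rewrite big_cons; congr (_ + _).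
rewrite mulr_sumr; apply: eq_bigr => j _.
by rewrite mulrA mulrCA divff // mulr1.
Qed.
End barrel.

Lemma nb1 (b : bool) : (b%:R : R) <= 1.
Proof. by case: b; rewrite ?ler01 ?lexx. Qed.

Lemma sumfun1 x t : sumfun [:: (x, t)] = fun f => t * f x.
Proof. by apply: funext => f; rewrite /sumfun big_cons big_nil addr0. Qed.

Lemma part_dist : PART X -> Cp_distinguished R X.
Proof.
move=> hP A hA.
have hw : forall x, exists r : R, 0 < r /\
    forall t, `|t| * r <= 1 -> A (fun f => t * f x).
  move=> x; have [r [r0 hr]] := hA.2.2.2 _ (sumfun_dual [:: (x, 1)]).
  have [chi [Achi echi]] : exists chi, A chi /\ sumfun [:: (x, 1)] = r *: chi.
    by apply: hr; rewrite ger0_norm // ltW.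
  exists r; split => // t ht.
  have := barrel_comb _ hA (t * r) 0 Achi Achi.
  rewrite normr0 addr0 normrM (ger0_norm (ltW r0)) => /(_ ht).
  congr A; apply: funext => f.
  have := congr1 (fun F => F f) echi; rewrite sumfun1 /= mul1r fctE => ->.
  by rewrite mul0r addr0 mulrA.
have [w hw'] := choice hw.
have w0 x : 0 < w x by have [] := hw' x.
pose D n := [set x | n%:R <= w x < n.+1%:R].
have Dpart : partition_fam X D.
  split.
    move=> i j ij; apply/seteqP; split => // x [/andP[a b] /andP[c d]].
    have [lij|lji|eij] := ltngtP i j; last by [].
      have : w x < w x by apply: (lt_le_trans b); apply: le_trans c; rewrite ler_nat.
      by rewrite ltxx.
    have : w x < w x by apply: (lt_le_trans d); apply: le_trans a; rewrite ler_nat.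
    by rewrite ltxx.
  apply/seteqP; split => // x _; exists (Num.trunc (w x)) => //.
  exact: truncn_itv (ltW (w0 x)).
have [U [sU [oU pU]]] := hP D Dpart.
have hN y : exists N, forall n, U n y -> (n < N)%N := nat_finite_bound (pU y).
have [N hN'] := choice hN.
pose B := [set g : X -> R | Cp R X g /\ forall y c, 0 <= c ->
   (forall n, U n y -> n.+1%:R <= c) -> `|g y| <= c].
have Bb : Cp_bounded R X B.
  apply: (@ptws_bounded B (fun y => (N y)%:R)) => [g [] //|g y [_ hg]].
  by apply: hg => // n /hN' nN; rewrite ler_nat.
exists B, 1; split => //; split => // phi [hphi hsm].
have [zs [c [uzs hrep]]] := rep phi hphi.
pose tn z := Num.trunc (w z).
have Dt z : D (tn z) z by exact: truncn_itv (ltW (w0 z)).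
have hO z : z \in zs -> open (U (tn z)) /\ U (tn z) z.
  by move=> _; split; [exact: oU|exact: sU].
have [g [cg [gz gb]]] := @interp zs (fun z => Num.sg (c z) * w z)
   (fun z => U (tn z)) uzs hO.
have Bg : B g.
  split => // y c' c0 hc; apply: gb => // z zz Ozy.
  have /andP[_ hlt] := Dt z.
  apply: le_trans (hc _ Ozy); apply: le_trans (ltW hlt).
  rewrite normrM normr_sg (gtr0_norm (w0 z)) ler_piMl ?(ltW (w0 z)) //.
  exact: nb1.
have hsum : \sum_(z <- zs) `|c z| * w z < 1.
  have := hsm g Bg; rewrite /= subr0 hrep //.
  rewrite (eq_big_seq (fun z => `|c z| * w z)); last first.
    by move=> z zz; rewrite gz // mulrA [c z * _]mulrC -normrEsg.
  rewrite ger0_norm //; apply: sumr_ge0 => z _; apply: mulr_ge0 => //; exact: ltW (w0 z).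
pose ps := map (fun z => (z, c z)) zs.
have Aps : A (sumfun ps).
  have H1 : forall z, A (fun f => (Num.sg (c z) / w z) * f z).
    move=> z; apply: (hw' z).2.
    rewrite normrM normfV (gtr0_norm (w0 z)) divfK ?gt_eqF //.
    by rewrite normr_sg nb1.
  have H2 : \sum_(z <- zs) `|(`|c z| * w z)| <= 1.
    apply: ltW; apply: le_lt_trans hsum; rewrite le_eqVlt; apply/orP; left.
    apply/eqP; apply: eq_bigr => z _.
    by rewrite ger0_norm //; apply: mulr_ge0 => //; exact: ltW (w0 z).
  have := @barrel_sum A hA X zs (fun z => `|c z| * w z)
    (fun z f => (Num.sg (c z) / w z) * f z) H1 H2.
  congr A; apply: funext => f; rewrite /sumfun big_map.
  apply: eq_bigr => z _ /=.
  rewrite mulrA; congr (_ * _).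
  by rewrite [Num.sg _ / _]mulrC mulrA mulfK ?gt_eqF // mulrC mulr_sg_norm.
apply: (@sat A phi (sumfun ps) hA.2.1 Aps hphi (sumfun_dual ps)) => f hf.
by rewrite hrep // /sumfun big_map.
Qed.

Lemma dual_comb phi psi a b : Cp_dual R X phi -> Cp_dual R X psi ->
  Cp_dual R X (fun f => a * phi f + b * psi f).
Proof.
move=> hphi hpsi; split.
  move=> a' b' f g hf hg; rewrite hphi.1 // hpsi.1 //; ring.
move=> x.
apply: (@continuousD _ _ (subspace (Cp R X : set {ptws X -> R}))
  (fun f => a * phi f) (fun f => b * psi f) x).
  apply: (@continuousM _ (subspace (Cp R X : set {ptws X -> R})) (fun=> a) phi x).
    exact: cst_continuous.
  exact: hphi.2 x.
apply: (@continuousM _ (subspace (Cp R X : set {ptws X -> R})) (fun=> b) psi x).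
  exact: cst_continuous.
exact: hpsi.2 x.
Qed.

Lemma dist_part : Cp_distinguished R X -> PART X.
Proof.
move=> hd D [dD cD].
have hw x : exists n, D n x.
  have : [set: X] x by [].
  by rewrite -cD => -[n _ Dn]; exists n.
have [w hw'] := choice hw.
have wuniq n x : D n x -> w x = n.
  move=> Dn; apply: contrapT => nw.
  have := dD _ _ nw; move/seteqP => [+ _] => /(_ x (conj (hw' x) Dn)).
  by [].
pose W x : R := (w x).+1%:R.
have W0 x : 0 < W x by rewrite ltr0Sn.
pose A := [set phi | Cp_dual R X phi /\ exists ps : seq (X * R),
   (forall g, Cp R X g -> phi g = sumfun ps g) /\
   \sum_(p <- ps) `|p.2| * W p.1 <= 1].
have hbar : strong_barrel R X A.
  split; first by move=> phi [].
  split.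
    move=> psi hpsi nA.
    have [zs [c [uzs hrep]]] := rep psi hpsi.
    pose S := \sum_(z <- zs) `|c z| * W z.
    have S1 : 1 < S.
      rewrite ltNge; apply/negP => hS; apply: nA; split => //.
      exists (map (fun z => (z, c z)) zs); split; last by rewrite big_map.
      by move=> g hg; rewrite hrep // /sumfun big_map.
    pose Wm := \sum_(z <- zs) W z + 1.
    have Wsum0 : 0 <= \sum_(z <- zs) W z by apply: sumr_ge0 => z _; exact: ltW.
    have Wm0 : 0 < Wm by rewrite ltr_wpDl.
    have WWm z : z \in zs -> W z <= Wm.
      move=> zz; apply: le_trans (_ : \sum_(z <- zs) W z <= Wm); last by rewrite lerDl.
      rewrite (bigD1_seq z) //= lerDl; apply: sumr_ge0 => y _; exact: ltW.
    pose B := [set g : X -> R | Cp R X g /\ forall y, `|g y| <= 1].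
    exists B, ((S - 1) / Wm); split.
      by apply: (@ptws_bounded B (fun=> 1)) => [g []//|g y [_ h]]; exact: h.
    split; first by rewrite divr_gt0 // subr_gt0.
    move=> phi [hphi hnear] [_ [ps [hps hps1]]].
    pose ys := undup (zs ++ map fst ps).
    pose v y := if y \in zs then Num.sg (c y) * W y / Wm else 0.
    have [g [cg [gz gb]]] := @interp ys v (fun=> setT) (undup_uniq _)
      (fun _ _ => conj openT I).
    have vb y : `|v y| <= W y / Wm.
      rewrite /v; case: ifP => _; last by rewrite normr0 divr_ge0 // ltW.
      rewrite normrM normrM normr_sg (gtr0_norm (W0 y)) normfV (gtr0_norm Wm0).
      by rewrite -mulrA; apply: ler_piMl; [rewrite divr_ge0 // ltW|exact: nb1].
    have Bg : B g.
      split => // y; apply: gb => // z _ _; have [zz|nz] := boolP (z \in zs).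
        apply: le_trans (vb z) _; rewrite ler_pdivrMr // mul1r.
        exact: WWm.
      by rewrite /v (negbTE nz) normr0.
    have hpsig : psi g = S / Wm.
      rewrite hrep // /S mulr_suml; apply: eq_big_seq => z zz.
      rewrite gz; last by rewrite mem_undup mem_cat zz.
      rewrite /v zz !mulrA; congr (_ * _ * _).
      by rewrite mulrC -normrEsg.
    have hphig : `|phi g| <= Wm^-1.
      rewrite hps // /sumfun; apply: le_trans (ler_norm_sum _ _ _) _.
      apply: le_trans (_ : \sum_(p <- ps) `|p.2| * W p.1 / Wm <= _).
        rewrite big_seq [X in _ <= X]big_seq; apply: ler_sum => p pps.
        rewrite normrM -mulrA; apply: ler_wpM2l => //.
        rewrite gz; first exact: vb.
        by rewrite mem_undup mem_cat map_f ?orbT.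
      by rewrite -mulr_suml -[X in _ <= X]mul1r ler_wpM2r // invr_ge0 ltW.
    have := hnear g Bg; rewrite hpsig.
    have h1 : S / Wm - phi g <= `|phi g - S / Wm| by rewrite distrC ler_norm.
    have h2 : phi g <= `|phi g| by exact: ler_norm.
    have -> : (S - 1) / Wm = S / Wm - Wm^-1 by rewrite mulrBl mul1r.
    move=> hlt; have : S / Wm - Wm^-1 < S / Wm - Wm^-1.
      apply: le_lt_trans hlt; apply: le_trans h1.
      by rewrite lerD2l lerN2; exact: le_trans h2 hphig.
    by rewrite ltxx.
  split.
    move=> phi psi a b [hphi [ps1 [h1 s1]]] [hpsi [ps2 [h2 s2]]] hab.
    have -> : a *: phi + b *: psi = (fun f => a * phi f + b * psi f).
      by apply: funext => f; rewrite !fctE.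
    split; first exact: dual_comb.
    exists (map (fun p => (p.1, a * p.2)) ps1 ++ map (fun p => (p.1, b * p.2)) ps2).
    split.
      move=> g hg; rewrite h1 // h2 // /sumfun big_cat !big_map /= !mulr_sumr.
      by congr (_ + _); apply: eq_bigr => p _; rewrite mulrA.
    rewrite big_cat !big_map /=; apply: le_trans hab; apply: lerD.
      under eq_bigr do rewrite normrM -mulrA.
      by rewrite -mulr_sumr; apply: ler_piMr.
    under eq_bigr do rewrite normrM -mulrA.
    by rewrite -mulr_sumr; apply: ler_piMr.
  move=> phi hphi.
  have [zs [c [uzs hrep]]] := rep phi hphi.
  pose S := \sum_(z <- zs) `|c z| * W z.
  have S0 : 0 <= S by apply: sumr_ge0 => z _; apply: mulr_ge0 => //; exact: ltW.
  exists (S + 1); split; first by rewrite ltr_wpDl.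
  move=> s hs.
  have s0 : s != 0 by rewrite -normr_gt0; apply: lt_le_trans hs; rewrite ltr_wpDl.
  have s0' : 0 < `|s| by rewrite normr_gt0.
  exists (fun f => s^-1 * phi f + 0 * phi f); split.
    split; first exact: dual_comb.
    exists (map (fun z => (z, c z / s)) zs); split.
      move=> g hg; rewrite hrep // /sumfun big_map mul0r addr0 mulr_sumr.
      by apply: eq_bigr => z _ /=; rewrite mulrCA mulrA.
    rewrite big_map /=.
    under eq_bigr do rewrite normrM normfV mulrAC.
    rewrite -mulr_suml ler_pdivrMr // mul1r; apply: le_trans hs.
    by rewrite lerDl.
  by apply: funext => f; rewrite fctE mul0r addr0 scalerA divff // scale1r.
have [B0 [eps0 [hB0 [e0 hsub]]]] := hd A hbar.
have B0Cp := hB0.1.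
have key x : exists f, B0 f /\ eps0 * W x / 4 <= `|f x|.
  have [//|hn] := pselect (exists f, B0 f /\ eps0 * W x / 4 <= `|f x|).
  exfalso.
  have hlt f : B0 f -> `|f x| < eps0 * W x / 4.
    move=> Bf; rewrite ltNge; apply/negP => hle; apply: hn; by exists f.
  pose t := 2 / W x.
  have t0 : 0 < t by rewrite divr_gt0.
  have Aphi : A (sumfun [:: (x, t)]).
    apply: hsub; split; first exact: sumfun_dual.
    move=> f Bf; rewrite /= subr0 sumfun1 normrM (gtr0_norm t0).
    have := hlt f Bf; rewrite -(ltr_pM2l t0) => h; apply: lt_le_trans h _.
    have -> : t * (eps0 * W x / 4) = eps0 / 2.
      by rewrite /t; field; rewrite gt_eqF.
    lra.
  have [_ [ps [hps hps1]]] := Aphi.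
  pose ys := undup (x :: map fst ps).
  have [g [cg [gz _]]] := @interp ys (fun y => if y == x then 1 else 0) (fun=> setT)
    (undup_uniq _) (fun _ _ => conj openT I).
  have := hps g cg; rewrite sumfun1 gz ?eqxx ?mulr1; last by rewrite mem_undup mem_head.
  move=> ht.
  have : `|sumfun ps g| <= 1 / W x.
    rewrite /sumfun; apply: le_trans (ler_norm_sum _ _ _) _.
    apply: le_trans (_ : \sum_(p <- ps) `|p.2| * W p.1 / W x <= _).
      rewrite big_seq [X in _ <= X]big_seq; apply: ler_sum => p pps.
      rewrite normrM -mulrA; apply: ler_wpM2l => //.
      rewrite gz; last by rewrite mem_undup in_cons map_f ?orbT.
      case: eqP => [->|_]; first by rewrite normr1 divff ?gt_eqF.
      by rewrite normr0 divr_ge0 // ltW.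
    by rewrite -mulr_suml ler_wpM2r // invr_ge0 ltW.
  rewrite -ht (ger0_norm (ltW t0)) /t ler_pM2r ?invr_gt0 //.
  lra.
have [F hF] := choice key.
pose U n := [set y | exists f, B0 f /\ eps0 * n.+1%:R / 8 < `|f y|].
exists U; split.
  move=> n x Dx; exists (F x); split; first exact: (hF x).1.
  have := (hF x).2; rewrite /W (wuniq n x Dx) => h; apply: lt_le_trans h.
  have : 0 < eps0 * n.+1%:R by rewrite mulr_gt0.
  lra.
split.
  move=> n.
  have -> : U n = \bigcup_(f in B0) [set y | eps0 * n.+1%:R / 8 < `|f y|].
    apply/seteqP; split => y; first by move=> [f [Bf hy]]; exists f.
    by move=> [f Bf hy]; exists f.
  apply: bigcup_open => f Bf.
  apply: (@open_comp _ _ (fun y => `|f y|) [set r | eps0 * n.+1%:R / 8 < r]).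
    by move=> y _; exact: (continuous_comp (B0Cp _ Bf y) (@norm_continuous _ _ _)).
  exact: open_gt.
move=> y; have [K hK] := @bounded_ptws B0 hB0 y.
apply: (@bound_finite _ (Num.Def.archi_bound (8 * K / eps0))) => n [f [Bf hf]].
have hK' := hK f Bf.
have h1 : (n.+1%:R : R) < 8 * K / eps0.
  rewrite ltr_pdivlMr //.
  have : 0 <= `|f y| by [].
  lra.
have : (n.+1%:R : R) < (Num.Def.archi_bound (8 * K / eps0))%:R.
  apply: lt_trans h1 _; apply: archi_boundP.
  have K0 : 0 <= K := le_trans (normr_ge0 _) (ltW hK').
  by apply: divr_ge0; [lra|exact: ltW].
by rewrite ltr_nat => /ltnW.
Qed.

End an.

Local Close Scope ring_scope.

Theorem theorem2p1 (R : realType) (X : topologicalType) :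
  tychonoff_space R X -> infinite_set [set: X] ->
  [/\ (Cp_distinguished R X <->
        forall D : nat -> set X, partition_fam X D ->
          exists U, point_finite_open_expansion X D U),
      ((forall D : nat -> set X, partition_fam X D ->
          exists U, point_finite_open_expansion X D U) <->
       forall D : nat -> set X, pairwise_disjoint_fam X D ->
          exists U, point_finite_open_expansion X D U) &
      ((forall D : nat -> set X, pairwise_disjoint_fam X D ->
          exists U, point_finite_open_expansion X D U) <->
       delta_space X)].
Proof.
move=> HT _; split.
- by split; [exact: dist_part HT|exact: part_dist HT].
- by split; [exact: part_disj|exact: disj_part].
- by split; [exact: disj_delta|exact: delta_disj].
Qed.
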